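(* Let $\mathcal{P}\subset\mathbb{R}^d$ be a finite set of $n$ item vectors, $\bm{q}\in\mathbb{R}^d$, $k>1$ an integer with $k\le n$, $\lambda\in[0,1]$, $\mu>0$, and assume $\langle\bm{x},\bm{y}\rangle\ge0$ for all $\bm{x},\bm{y}\in\mathcal{P}\cup\{\bm{q}\}$. Let $\mathcal{S}^*\in\arg\max_{\mathcal{T}\subseteq\mathcal{P},|\mathcal{T}|=k}f_{avg}(\mathcal{T})$ and let $\mathcal{S}$ be the output of the DualGreedy algorithm run with $f=f_{avg}$. Then $$f_{avg}(\mathcal{S})\ \ge\ \tfrac14 f_{avg}(\mathcal{S}^* )-\tfrac34\,div^*_{max},\qquad div^*_{max}=\max_{\bm{p}_x,\bm{p}_y\in\mathcal{P},\,\bm{p}_x\ne\bm{p}_y}\mu(1-\lambda)\langle\bm{p}_x,\bm{p}_y\rangle.$$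
   Context: For $\mathcal{S}\subseteq\mathcal{P}$, $f_{avg}(\mathcal{S}) = \frac{\lambda}{k}\sum_{\bm{p}\in\mathcal{S}}\langle\bm{p},\bm{q}\rangle - \frac{2\mu(1-\lambda)}{k(k-1)}\sum_{\{\bm{p},\bm{p}'\}\subseteq\mathcal{S},\,\bm{p}\neq\bm{p}'}\langle\bm{p},\bm{p}'\rangle$ (unordered pairs of distinct elements), and the marginal gain is $\Delta_f(\bm{p},\mathcal{S}) = f_{avg}(\mathcal{S}\cup\{\bm{p}\})-f_{avg}(\mathcal{S}) = \frac{\lambda}{k}\langle\bm{p},\bm{q}\rangle - \frac{2\mu(1-\lambda)}{k(k-1)}\sum_{\bm{p}'\in\mathcal{S}}\langle\bm{p},\bm{p}'\rangle$ for $\bm{p}\notin\mathcal{S}$. DualGreedy algorithm: initialize $\mathcal{S}_1=\mathcal{S}_2=\varnothing$. While $|\mathcal{S}_1|<k$ or $|\mathcal{S}_2|<k$: for each $j\in\{1,2\}$ with $|\mathcal{S}_j|<k$, let $\bm{p}_j^*\in\arg\max_{\bm{p}\in\mathcal{P}\setminus(\mathcal{S}_1\cup\mathcal{S}_2)}\Delta_f(\bm{p},\mathcal{S}_j)$ (if $|\mathcal{S}_j|=k$, $\bm{p}_j^*$ is undefined and its gain is treated as $-\infty$); if $\max_{j}\Delta_f(\bm{p}_j^*,\mathcal{S}_j)\le0$, stop; otherwise, if $\Delta_f(\bm{p}_1^*,\mathcal{S}_1)\ge\Delta_f(\bm{p}_2^*,\mathcal{S}_2)$ add $\bm{p}_1^*$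 to $\mathcal{S}_1$, else add $\bm{p}_2^*$ to $\mathcal{S}_2$. Output $\mathcal{S}\in\arg\max_{j\in\{1,2\}}f_{avg}(\mathcal{S}_j)$ (a set of at most $k$ items). *)

(* Defs.v *)
From mathcomp Require Import all_boot all_order all_algebra.
Set Implicit Arguments. Unset Strict Implicit. Unset Printing Implicit Defensive.
Import Order.TTheory GRing.Theory Num.Theory.
Local Open Scope ring_scope.

Definition dotv (R : realFieldType) (d : nat) (x y : 'rV[R]_d) : R :=
  \sum_(i < d) x 0 i * y 0 i.

Section DualGreedy.
Variables (R : realFieldType) (d n : nat) (p : 'I_n -> 'rV[R]_d) (q : 'rV[R]_d)
          (k : nat) (lam mu : R).

Definition favg (S : {set 'I_n}) : R :=
  lam / k%:R * (\sum_(i in S) dotv (p i) q)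
  - 2 * mu * (1 - lam) / (k%:R * (k%:R - 1)) *
      (\sum_(i in S) \sum_(j in S | (i < j)%N) dotv (p i) (p j)).

(* marginal gain Delta_f(p_i, S) (for i not in S) *)
Definition gain (S : {set 'I_n}) (i : 'I_n) : R :=
  lam / k%:R * dotv (p i) q
  - 2 * mu * (1 - lam) / (k%:R * (k%:R - 1)) * (\sum_(j in S) dotv (p i) (p j)).

Definition candidate (Sj So : {set 'I_n}) (i : 'I_n) : Prop :=
  [/\ (#|Sj| < k)%N, i \notin Sj :|: So &
      forall i', i' \notin Sj :|: So -> gain Sj i' <= gain Sj i].

Definition dg_step (st st' : {set 'I_n} * {set 'I_n}) : Prop :=
  let: (S1, S2) := st in
  (exists i, [/\ candidate S1 S2 i, 0 < gain S1 i,
     (forall i2, candidate S2 S1 i2 -> gain S2 i2 <= gain S1 i) &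
     st' = (i |: S1, S2)]) \/
  (exists i, [/\ candidate S2 S1 i, 0 < gain S2 i,
     (forall i1, candidate S1 S2 i1 -> gain S1 i1 < gain S2 i) &
     st' = (S1, i |: S2)]).

(* The loop has stopped: either both sets are full (no candidates, gains
   treated as -oo) or the maximal gain is <= 0. *)
Definition dg_stopped (st : {set 'I_n} * {set 'I_n}) : Prop :=
  let: (S1, S2) := st in
  (forall i, candidate S1 S2 i -> gain S1 i <= 0) /\
  (forall i, candidate S2 S1 i -> gain S2 i <= 0).

Inductive dg_reach : {set 'I_n} * {set 'I_n} -> Prop :=
| dg_reach0 : dg_reach (set0, set0)
| dg_reachS st st' : dg_reach st -> dg_step st st' -> dg_reach st'.

(* S is a possible output of DualGreedy (over all tie-breaking choices). *)
Definition dualgreedy_output (S : {set 'I_n}) : Prop :=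
  exists S1 S2, [/\ dg_reach (S1, S2), dg_stopped (S1, S2),
    (S = S1 \/ S = S2) & favg S1 <= favg S /\ favg S2 <= favg S].

End DualGreedy.

(* Main.v *)
Require Import Defs.
From mathcomp Require Import all_boot all_order all_algebra.
From mathcomp Require Import ring lra.
Import Order.TTheory GRing.Theory Num.Theory.
Set Implicit Arguments. Unset Strict Implicit. Unset Printing Implicit Defensive.
Local Open Scope ring_scope.

Lemma dotvC (R : realFieldType) d (x y : 'rV[R]_d) : dotv x y = dotv y x.
Proof. by rewrite /dotv; apply: eq_bigr => i _; rewrite mulrC. Qed.

Lemma pairsum_add (R : realFieldType) n (c : 'I_n -> 'I_n -> R) (S : {set 'I_n}) x :
  (forall i j, c i j = c j i) -> x \notin S ->
  \sum_(i in x |: S) \sum_(j in x |: S | (i < j)%N) c i j =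
  \sum_(i in S) \sum_(j in S | (i < j)%N) c i j + \sum_(j in S) c x j.
Proof.
move=> cC xS.
under eq_bigr => i _ do rewrite big_mkcondr /= (big_setU1 _ xS) /=.
rewrite (big_setU1 _ xS) /= ltnn /= add0r.
rewrite big_split /=.
have -> : \sum_(i in S) \sum_(i0 in S) (if (i < i0)%N then c i i0 else 0)
   = \sum_(i in S) \sum_(j in S | (i < j)%N) c i j.
  by apply: eq_bigr => i _; rewrite big_mkcondr.
rewrite addrA addrC; congr (_ + _).
rewrite -big_split /=; apply: eq_bigr => j jS.
have jx : j != x by apply/eqP => e; move: jS; rewrite e (negbTE xS).
case: (ltngtP x j) => h.
- by rewrite addr0.
- by rewrite add0r cC.
- by move: jx; rewrite (val_inj h) eqxx.
Qed.

Lemma favg_add (R : realFieldType) d n (p : 'I_n -> 'rV[R]_d) q k (lam mu : R) (S : {set 'I_n}) x :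
  x \notin S ->
  favg p q k lam mu (x |: S) = favg p q k lam mu S + gain p q k lam mu S x.
Proof.
move=> xS; rewrite /favg /gain (big_setU1 _ xS) /=.
rewrite (@pairsum_add _ _ (fun i j => dotv (p i) (p j))) //; last by move=> *; apply: dotvC.
ring.
Qed.

Lemma exists_argmax (R : realFieldType) n (P : pred 'I_n) (F : 'I_n -> R) o :
  P o -> exists i, P i /\ forall j, P j -> F j <= F i.
Proof.
move=> Po; case: (@arg_maxP _ R _ o P F Po) => i Pi H.
by exists i; split.
Qed.

Definition uu (R : realFieldType) d n (p : 'I_n -> 'rV[R]_d) q k (lam : R) (i : 'I_n) : R :=
  lam / k%:R * dotv (p i) q.

Definition HI (R : realFieldType) d n (p : 'I_n -> 'rV[R]_d) q k (lam mu : R)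
  (O : {set 'I_n}) (e : R) (A B : {set 'I_n}) : Prop :=
  [/\ (forall i, i \in A -> i \notin B), (#|A| <= k)%N,
      0 <= favg p q k lam mu A /\ 0 <= favg p q k lam mu B,
      (forall o, o \notin A :|: B -> #|A|%:R * uu p q k lam o <=
          favg p q k lam mu A + e * (#|A|%:R * (#|A|%:R - 1)) / 2) &
      \sum_(o in O :&: B) (k%:R * uu p q k lam o - favg p q k lam mu A
                         - e * (k%:R * (k%:R - 1)) / 2)
        <= k%:R * favg p q k lam mu B ].

Lemma arith (R : realFieldType) (s k : nat) (u fA e G : R) :
  (s <= k)%N -> 0 <= e -> 0 <= G ->
  s%:R * u <= fA + e * (s%:R * (s%:R - 1)) / 2 ->
  ((s < k)%N -> u <= G + e * s%:R) ->
  k%:R * u <= fA + e * (k%:R * (k%:R - 1)) / 2 + k%:R * G.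
Proof.
move=> sk e0 G0 h1 h2.
case: (ltngtP s k) => [lt| |eq]; last first.
- rewrite -eq; have : 0 <= s%:R * G :> R by apply: mulr_ge0.
  lra.
- by rewrite ltnNge sk.
have lt' : s%:R + 1 <= k%:R :> R by rewrite natr1 ler_nat.
have h3 := h2 lt.
have h4 : (k%:R - s%:R) * u <= (k%:R - s%:R) * (G + e * s%:R).
  by apply: ler_wpM2l => //; lra.
have h5 : 0 <= e * ((k%:R - s%:R) * (k%:R - s%:R - 1)) :> R.
  by apply: mulr_ge0 => //; apply: mulr_ge0; lra.
have h6 : 0 <= s%:R * G :> R by apply: mulr_ge0.
nra.
Qed.

Lemma gain_lb (R : realFieldType) d n (p : 'I_n -> 'rV[R]_d) q k (lam mu divmax : R)
  (A : {set 'I_n}) o :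
  (1 < k)%N ->
  (forall i j, i != j -> mu * (1 - lam) * dotv (p i) (p j) <= divmax) ->
  o \notin A ->
  uu p q k lam o - (2 * divmax / (k%:R * (k%:R - 1))) * #|A|%:R <= gain p q k lam mu A o.
Proof.
move=> k1 Hd oA.
have K1 : 1 < k%:R :> R by rewrite ltr1n.
have KK : 0 <= (k%:R * (k%:R - 1))^-1 :> R.
  by rewrite invr_ge0; apply: mulr_ge0; lra.
rewrite /gain /uu lerD2l lerN2 mulr_sumr.
rewrite mulr_natr -sumr_const.
apply: ler_sum => j jA.
have oj : o != j by apply/eqP => e; move: oA; rewrite e jA.
have := Hd o j oj.
move=> h.
have -> : 2 * mu * (1 - lam) / (k%:R * (k%:R - 1)) * dotv (p o) (p j)
   = (mu * (1 - lam) * dotv (p o) (p j)) * (2 * (k%:R * (k%:R - 1))^-1) by ring.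
have -> : 2 * divmax / (k%:R * (k%:R - 1)) = divmax * (2 * (k%:R * (k%:R - 1))^-1) by ring.
by apply: ler_wpM2r => //; apply: mulr_ge0 => //; lra.
Qed.

Lemma HI_own (R : realFieldType) d n (p : 'I_n -> 'rV[R]_d) q k (lam mu : R)
  (O : {set 'I_n}) (e : R) (A B : {set 'I_n}) x :
  (forall (A : {set 'I_n}) o, o \notin A ->
     uu p q k lam o - e * #|A|%:R <= gain p q k lam mu A o) ->
  HI p q k lam mu O e A B -> candidate p q k lam mu A B x ->
  0 < gain p q k lam mu A x -> HI p q k lam mu O e (x |: A) B.
Proof.
move=> Hgl [disj card [fA fB] cb db] [lt xn maxx] gpos.
have xA : x \notin A by move: xn; rewrite in_setU negb_or => /andP[].
have xB : x \notin B by move: xn; rewrite in_setU negb_or => /andP[].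
have fx := favg_add p q k lam mu xA.
have cx : #|x |: A| = #|A|.+1 by rewrite cardsU1 xA.
split.
- move=> i; rewrite in_setU1 => /orP[/eqP -> //|]; exact: disj.
- by rewrite cx.
- split => //; rewrite fx; lra.
- move=> o; rewrite !inE; case/norP => /norP[ox oA] oB.
  have oAB : o \notin A :|: B by rewrite in_setU negb_or oA oB.
  have h1 := cb o oAB.
  have h2 := maxx o oAB.
  have h3 := Hgl A o oA.
  rewrite cx -natr1 fx.
  set s := #|A|%:R in h1 h3 *.
  set u := uu p q k lam o in h1 h3 *.
  nra.
- apply: le_trans db; apply: ler_sum => o _; rewrite fx; lra.
Qed.

Lemma HI_other (R : realFieldType) d n (p : 'I_n -> 'rV[R]_d) q k (lam mu : R)
  (O : {set 'I_n}) (e : R) (A B : {set 'I_n}) x :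
  (forall (A : {set 'I_n}) o, o \notin A ->
     uu p q k lam o - e * #|A|%:R <= gain p q k lam mu A o) ->
  0 <= e ->
  HI p q k lam mu O e A B -> candidate p q k lam mu B A x ->
  0 < gain p q k lam mu B x ->
  (forall i, candidate p q k lam mu A B i -> gain p q k lam mu A i <= gain p q k lam mu B x) ->
  HI p q k lam mu O e A (x |: B).
Proof.
move=> Hgl e0 [disj card [fA fB] cb db] [lt xn maxx] gpos Hcmp.
have xA : x \notin A by move: xn; rewrite in_setU negb_or => /andP[].
have xB : x \notin B by move: xn; rewrite in_setU negb_or => /andP[].
have fx := favg_add p q k lam mu xB.
have xAB : x \notin A :|: B by rewrite in_setU negb_or xA xB.
split.
- move=> i iA; rewrite in_setU1 negb_or (disj i iA) andbT.
  by apply/eqP => ix; move: xA; rewrite -ix iA.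
- exact: card.
- split => //; rewrite fx; lra.
- move=> o; rewrite !inE; case/norP => oA /norP[_ oB].
  by apply: cb; rewrite in_setU negb_or oA oB.
- have Hx : k%:R * uu p q k lam x - favg p q k lam mu A - e * (k%:R * (k%:R - 1)) / 2
            <= k%:R * gain p q k lam mu B x.
    suff : k%:R * uu p q k lam x <= favg p q k lam mu A + e * (k%:R * (k%:R - 1)) / 2
             + k%:R * gain p q k lam mu B x by lra.
    apply: (arith (s:=#|A|)) => //; first exact: ltW.
      exact: cb.
    move=> sk.
    have [i [iP imax]] := @exists_argmax R n (fun i => i \notin A :|: B)
                             (gain p q k lam mu A) x xAB.
    have ci : candidate p q k lam mu A B i by split.
    have := Hcmp i ci; have := imax x xAB; have := Hgl A x xA; lra.
  rewrite fx [k%:R * (favg _ _ _ _ _ _ + _)]mulrDr.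
  case xO : (x \in O).
  + have -> : O :&: (x |: B) = x |: (O :&: B).
      apply/setP => i; rewrite !inE; case: (i =P x) => [->|] //=.
      by rewrite xO.
    rewrite big_setU1 /=; last by rewrite inE negb_and xB orbT.
    lra.
  + have -> : O :&: (x |: B) = O :&: B.
      apply/setP => i; rewrite !inE; case: (i =P x) => [->|] //=.
      by rewrite xO (negbTE xB).
    have : 0 <= k%:R * gain p q k lam mu B x by apply: mulr_ge0 => //; apply: ltW.
    lra.
Qed.

Lemma favg0 (R : realFieldType) d n (p : 'I_n -> 'rV[R]_d) q k (lam mu : R) :
  favg p q k lam mu set0 = 0.
Proof. by rewrite /favg !big_set0 !mulr0 subr0. Qed.

Lemma HI_reach (R : realFieldType) d n (p : 'I_n -> 'rV[R]_d) q k (lam mu : R)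
  (O : {set 'I_n}) (e : R) st :
  (forall (A : {set 'I_n}) o, o \notin A ->
     uu p q k lam o - e * #|A|%:R <= gain p q k lam mu A o) ->
  0 <= e ->
  dg_reach p q k lam mu st ->
  HI p q k lam mu O e st.1 st.2 /\ HI p q k lam mu O e st.2 st.1.
Proof.
move=> Hgl e0; elim => [|[S1 S2] st' _ [IH1 IH2] step].
  have H0 : HI p q k lam mu O e set0 set0.
    split.
    - by move=> i; rewrite in_set0.
    - by rewrite cards0.
    - by rewrite favg0.
    - by move=> o _; rewrite cards0 favg0 !(mul0r, mulr0, add0r).
    - by rewrite setI0 big_set0 favg0 mulr0.
  by split.
case: step => [[i [ci gi cmp ->]]|[i [ci gi cmp ->]]] /=.
  split; first exact: HI_own.
  exact: HI_other.
split; last exact: HI_own.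
apply: HI_other => // i1 c1; apply: ltW; exact: cmp.
Qed.

Lemma final_bound (R : realFieldType) d n (p : 'I_n -> 'rV[R]_d) q k (lam mu : R)
  (O : {set 'I_n}) (e : R) (A B : {set 'I_n}) :
  (1 < k)%N -> #|O| = k ->
  (forall (A : {set 'I_n}) o, o \notin A ->
     uu p q k lam o - e * #|A|%:R <= gain p q k lam mu A o) ->
  0 <= e ->
  HI p q k lam mu O e A B ->
  (forall i, candidate p q k lam mu A B i -> gain p q k lam mu A i <= 0) ->
  \sum_(o in O :\: A) uu p q k lam o <=
    favg p q k lam mu A + favg p q k lam mu B + e * (k%:R * (k%:R - 1)) / 2.
Proof.
move=> k1 cO Hgl e0 [disj card [fA fB] cb db] stop.
set c := e * (k%:R * (k%:R - 1)) / 2.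
set fa := favg p q k lam mu A.
set fb := favg p q k lam mu B.
have K1 : 1 < k%:R :> R by rewrite ltr1n.
have c0 : 0 <= c by rewrite /c; apply: divr_ge0 => //; apply: mulr_ge0 => //; apply: mulr_ge0; lra.
have h0 : forall o, o \notin A :|: B -> k%:R * uu p q k lam o - fa - c <= 0.
  move=> o oAB.
  suff : k%:R * uu p q k lam o <= fa + c + k%:R * 0 by lra.
  apply: (arith (s:=#|A|)) => //; first exact: cb.
  move=> sk.
  have [i [iP imax]] := @exists_argmax R n (fun i => i \notin A :|: B)
                           (gain p q k lam mu A) o oAB.
  have ci : candidate p q k lam mu A B i by split.
  have oA : o \notin A by move: oAB; rewrite in_setU negb_or => /andP[].
  have := stop i ci; have := imax o oAB; have := Hgl A o oA; lra.
have hs : \sum_(o in O :\: A) (k%:R * uu p q k lam o - fa - c) <= k%:R * fb.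
  rewrite (@big_setID _ _ _ _ (O :\: A) B) /=.
  have -> : (O :\: A) :&: B = O :&: B.
    apply/setP => i; rewrite !inE; case iB: (i \in B); rewrite ?andbT ?andbF //.
    case iA: (i \in A) => //.
    by move: (disj i iA); rewrite iB.
  have : \sum_(i in (O :\: A) :\: B) (k%:R * uu p q k lam i - fa - c) <= 0.
    apply: sumr_le0 => i; rewrite !inE => /andP[iB /andP[iA _]].
    by apply: h0; rewrite in_setU negb_or iA iB.
  move: db; rewrite -/fa -/fb -/c; lra.
have E : \sum_(o in O :\: A) (k%:R * uu p q k lam o - fa - c)
   = k%:R * \sum_(o in O :\: A) uu p q k lam o - #|O :\: A|%:R * (fa + c).
  rewrite (eq_bigr (fun o => k%:R * uu p q k lam o - (fa + c))); last first.
    by move=> i _; ring.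
  by rewrite sumrB mulr_sumr sumr_const mulr_natl.
rewrite E in hs.
have hm : #|O :\: A|%:R <= k%:R :> R.
  by rewrite ler_nat -cO; apply: subset_leq_card; apply: subsetDl.
have hm2 : #|O :\: A|%:R * (fa + c) <= k%:R * (fa + c).
  by apply: ler_wpM2r => //; apply: addr_ge0.
rewrite -(ler_pM2l (_ : 0 < k%:R)); last lra.
rewrite -/fa -/fb -/c.
nra.
Qed.

Theorem theorem2 (R : realFieldType) (d n : nat) (p : 'I_n -> 'rV[R]_d)
  (q : 'rV[R]_d) (k : nat) (lam mu : R) (Sstar S : {set 'I_n}) (divmax : R) :
  injective p ->
  (1 < k)%N -> (k <= n)%N ->
  0 <= lam -> lam <= 1 -> 0 < mu ->
  (forall i j, 0 <= dotv (p i) (p j)) ->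
  (forall i, 0 <= dotv (p i) q) ->
  (forall i, 0 <= dotv q (p i)) ->
  0 <= dotv q q ->
  #|Sstar| = k ->
  (forall T : {set 'I_n}, #|T| = k -> favg p q k lam mu T <= favg p q k lam mu Sstar) ->
  (exists i j, i != j /\ divmax = mu * (1 - lam) * dotv (p i) (p j)) ->
  (forall i j, i != j -> mu * (1 - lam) * dotv (p i) (p j) <= divmax) ->
  dualgreedy_output p q k lam mu S ->
  favg p q k lam mu S >= 1 / 4 * favg p q k lam mu Sstar - 3 / 4 * divmax.
Proof.
move=> _ k1 _ lam0 lam1 mu0 Hpp Hpq _ _ cO _ [i0 [j0 [_ Ddef]]] Hd
  [S1 [S2 [reach stop _ [le1 le2]]]].
have K1 : 1 < k%:R :> R by rewrite ltr1n.
have D0 : 0 <= divmax.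
  by rewrite Ddef; apply: mulr_ge0; [apply: mulr_ge0; lra|].
set e := 2 * divmax / (k%:R * (k%:R - 1)).
have KK0 : 0 < k%:R * (k%:R - 1) :> R by apply: mulr_gt0; lra.
have e0 : 0 <= e by apply: divr_ge0 => //; [lra | apply: ltW].
have ce : e * (k%:R * (k%:R - 1)) / 2 = divmax.
  rewrite /e; field.
  by apply/andP; split; apply/eqP => h; lra.
have Hgl : forall (A : {set 'I_n}) o, o \notin A ->
     uu p q k lam o - e * #|A|%:R <= gain p q k lam mu A o.
  by move=> A o oA; apply: gain_lb.
have [H1 H2] := HI_reach Sstar Hgl e0 reach.
case: stop => st1 st2.
have F1 := final_bound k1 cO Hgl e0 H1 st1.
have F2 := final_bound k1 cO Hgl e0 H2 st2.
rewrite ce in F1 F2.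
have u0 : forall o, 0 <= uu p q k lam o.
  move=> o; rewrite /uu; apply: mulr_ge0 => //; apply: divr_ge0 => //; lra.
have disj : forall i, i \in S1 -> i \notin S2 by case: H1.
have HU : \sum_(o in Sstar) uu p q k lam o <=
   \sum_(o in Sstar :\: S1) uu p q k lam o + \sum_(o in Sstar :\: S2) uu p q k lam o.
  rewrite (@big_setID _ _ _ _ Sstar S1) /= addrC lerD2l.
  rewrite (@big_setID _ _ _ _ (Sstar :\: S2) S1) /=.
  have -> : (Sstar :\: S2) :&: S1 = Sstar :&: S1.
    apply/setP => i; rewrite !inE; case iS1: (i \in S1); rewrite ?andbT ?andbF //.
    by rewrite (negbTE (disj i iS1)).
  rewrite lerDl; apply: sumr_ge0 => i _; exact: u0.
have HO : favg p q k lam mu Sstar <= \sum_(o in Sstar) uu p q k lam o.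
  rewrite /favg /uu -mulr_sumr gerBl.
  apply: mulr_ge0.
    apply: divr_ge0; last exact: ltW.
    apply: mulr_ge0 => //; [apply: mulr_ge0 => //; exact: ltW | lra].
  by apply: sumr_ge0 => i _; apply: sumr_ge0 => j _; apply: Hpp.
lra.
Qed.
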